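(* Let $s\le L$ be positive integers, $\mathbf{D}\in\mathbb{R}^{N\times N}$, $\mathbf{H}\in\mathbb{R}^{N\times L}$, and consider the system $\mathbf{x}_k=\mathbf{D}\mathbf{x}_{k-1}+\mathbf{H}\mathbf{h}_k$ with inputs satisfying $\|\mathbf{h}_k\|_0\le s$. Suppose the system is $s$-sparse-controllable. Let $K^*$ be the minimum number of $s$-sparse input vectors required to steer the system from any given state to any other state, i.e. the smallest $K$ such that for all $\mathbf{x}_0,\mathbf{x}_{\mathrm{final}}\in\mathbb{R}^N$ there exist $\mathbf{h}_1,\dots,\mathbf{h}_K$ with $\|\mathbf{h}_k\|_0\le s$ and $\mathbf{x}_K=\mathbf{x}_{\mathrm{final}}$. Then $$\frac{N}{R^*_{\mathbf{H},s}}\le K^*\le\min\left\{q\left\lceil\frac{S^*}{s}\right\rceil,\ N-R^*_{\mathbf{H},s}+1\right\}\le N,$$ where $q$ is the degree of the minimal polynomial of $\mathbf{D}$, $R^*_{\mathbf{H},s}=\min\{\operatorname{rank}(\mathbf{H}),s\}$, and $$S^*=\min\Big\{|\mathcal{S}|:\ \mathcal{S}\subseteq\{1,\dots,L\},\ \operatorname{rank}\begin{bmatrix}\mathbf{D}-\lambda\mathbf{I} & \mathbf{H}_{\mathcal{S}}\end{bmatrix}=N\ \text{for all }\lambda\in\mathbb{C}\Big\}.$$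
   Context: $\|\cdot\|_0$ denotes the number of nonzero entries; $\mathbf{H}_{\mathcal{S}}$ is the submatrix of $\mathbf{H}$ formed by the columns indexed by $\mathcal{S}$. The system is $s$-sparse-controllable if for every initial state $\mathbf{x}_0\in\mathbb{R}^N$ and every final state $\mathbf{x}_{\mathrm{final}}\in\mathbb{R}^N$ there exist a finite $K$ and inputs $\mathbf{h}_1,\dots,\mathbf{h}_K$ with $\|\mathbf{h}_k\|_0\le s$ steering the system from $\mathbf{x}_0$ to $\mathbf{x}_K=\mathbf{x}_{\mathrm{final}}$. *)

(* Defs.v *)
From HB Require Import structures.
From mathcomp Require Import all_boot all_order all_algebra.
From mathcomp Require Import reals.
From mathcomp Require Import complex.
Set Implicit Arguments. Unset Strict Implicit. Unset Printing Implicit Defensive.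
Import Order.TTheory GRing.Theory Num.Theory.
Local Open Scope ring_scope.

Definition l0norm (R : realType) (L : nat) (h : 'cV[R]_L) : nat :=
  #|[set i : 'I_L | h i 0 != 0]|.

(* state of x_k = D x_{k-1} + H h_k; hs k stands for h_{k+1} *)
Fixpoint state (R : realType) (N L : nat) (D : 'M[R]_N) (H : 'M[R]_(N, L))
  (x0 : 'cV[R]_N) (hs : nat -> 'cV[R]_L) (k : nat) : 'cV[R]_N :=
  match k with
  | 0 => x0
  | k'.+1 => D *m state D H x0 hs k' + H *m hs k'
  end.

Definition steerable_in (R : realType) (N L : nat) (D : 'M[R]_N)
  (H : 'M[R]_(N, L)) (s K : nat) : Prop :=
  forall x0 xf : 'cV[R]_N, exists hs : nat -> 'cV[R]_L,
    (forall k, (k < K)%N -> (l0norm (hs k) <= s)%N) /\ state D H x0 hs K = xf.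

Definition sparse_controllable (R : realType) (N L : nat) (D : 'M[R]_N)
  (H : 'M[R]_(N, L)) (s : nat) : Prop :=
  forall x0 xf : 'cV[R]_N, exists (K : nat) (hs : nat -> 'cV[R]_L),
    (forall k, (k < K)%N -> (l0norm (hs k) <= s)%N) /\ state D H x0 hs K = xf.

Definition colsub_set (R : realType) (N L : nat) (H : 'M[R]_(N, L))
  (S : {set 'I_L}) : 'M[R]_(N, #|S|) :=
  colsub (fun j : 'I_#|S| => enum_val j) H.

Definition PBH_full (R : realType) (N L : nat) (D : 'M[R]_N)
  (H : 'M[R]_(N, L)) (S : {set 'I_L}) : Prop :=
  forall lambda : R[i],
    \rank (row_mx (map_mx (real_complex R) D - lambda%:M)
                  (map_mx (real_complex R) (colsub_set H S))) = N.

(* Main.v *)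
Require Import Defs.
From HB Require Import structures.
From mathcomp Require Import all_boot all_order all_algebra.
From mathcomp Require Import reals.
From mathcomp Require Import complex.
From mathcomp Require Import zify.
From Stdlib Require ClassicalEpsilon.
Set Implicit Arguments. Unset Strict Implicit. Unset Printing Implicit Defensive.
Import Order.TTheory GRing.Theory Num.Theory.
Local Open Scope ring_scope.
Section Lin.
Variables (F : fieldType) (N L : nat) (A : 'M[F]_N) (G : 'M[F]_(L, N)).

Definition VT (T : {set 'I_L}) : 'M[F]_N := (\sum_(j in T) <<row j G>>)%MS.

Lemma VT_subP (T : {set 'I_L}) m (X : 'M[F]_(m, N)) :
  reflect (forall j, j \in T -> (row j G <= X)%MS) (VT T <= X)%MS.
Proof.
apply: (iffP sumsmx_subP) => H j jT; first by rewrite -(genmxE (row j G)); exact: H.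
by rewrite genmxE; exact: H.
Qed.

Lemma row_VT (T : {set 'I_L}) j : j \in T -> (row j G <= VT T)%MS.
Proof. by move=> jT; apply: (sumsmx_sup j) => //; rewrite genmxE. Qed.

Lemma VT_sub_G (T : {set 'I_L}) : (VT T <= G)%MS.
Proof. by apply/VT_subP => j _; exact: row_sub. Qed.

Lemma VT_mono (T1 T2 : {set 'I_L}) : T1 \subset T2 -> (VT T1 <= VT T2)%MS.
Proof. by move=> /subsetP sT; apply/VT_subP => j /sT; exact: row_VT. Qed.

Lemma mulG_VT (T : {set 'I_L}) (u : 'rV[F]_L) :
  (forall j, j \notin T -> u 0 j = 0) -> (u *m G <= VT T)%MS.
Proof.
move=> uT; rewrite mulmx_sum_row; apply: summx_sub => j _.
case: (boolP (j \in T)) => jT; first by apply: scalemx_sub; exact: row_VT.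
by rewrite uT // scale0r sub0mx.
Qed.

Lemma VT_decomp (T : {set 'I_L}) (y : 'rV[F]_N) : (y <= VT T)%MS ->
  exists u : 'rV[F]_L, (forall j, j \notin T -> u 0 j = 0) /\ y = u *m G.
Proof.
move/sub_sumsmxP => [v ->].
exists (\row_j (if j \in T then (v j *m <<row j G>>%MS *m pinvmx (row j G)) 0 0 else 0)).
split=> [j jT|]; first by rewrite mxE (negbTE jT).
rewrite mulmx_sum_row.
rewrite [RHS](bigID (fun j => j \in T)) /= [X in _ = _ + X]big1 ?addr0; last first.
  by move=> j /negbTE jT; rewrite mxE jT scale0r.
apply: eq_bigr => j jT; rewrite mxE jT.
have h1 : (v j *m <<row j G>>%MS <= row j G)%MS by rewrite mulmx_sub // genmxE.
have h2 := mulmxKpV h1.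
rewrite -{1}h2.
set w := v j *m <<row j G>>%MS *m pinvmx (row j G).
by rewrite {1}(mx11_scalar w) mul_scalar_mx.
Qed.

Lemma VT_rowsub (T : {set 'I_L}) :
  (VT T :=: rowsub (fun k : 'I_#|T| => enum_val k) G)%MS.
Proof.
apply/eqmxP/andP; split.
  apply/VT_subP => j jT.
  rewrite -(enum_rankK_in jT jT) -row_rowsub; exact: row_sub.
apply/row_subP => k; rewrite row_rowsub; apply: row_VT; exact: enum_valP.
Qed.

Lemma rank_VT_card (T : {set 'I_L}) : (\rank (VT T) <= #|T|)%N.
Proof. by rewrite VT_rowsub rank_leq_row. Qed.

Lemma rank_VT_G (T : {set 'I_L}) : (\rank (VT T) <= \rank G)%N.
Proof. exact/mxrankS/VT_sub_G. Qed.

End Lin.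
Section Sched.
Variables (F : fieldType) (N L : nat) (A : 'M[F]_N) (G : 'M[F]_(L, N)).
Local Notation VT := (VT G).

Definition Wsch (sg : nat -> {set 'I_L}) K : 'M[F]_N :=
  (\sum_(e < K) (VT (sg e) *m A ^+ e))%MS.
Definition inv (X : 'M[F]_N) := (X *m A <= X)%MS.

Lemma term_Wsch sg K e : (e < K)%N -> (VT (sg e) *m A ^+ e <= Wsch sg K)%MS.
Proof. by move=> eK; apply: (sumsmx_sup (Ordinal eK)). Qed.

Lemma inv_pow X p : inv X -> (X *m A ^+ p <= X)%MS.
Proof.
move=> iX; elim: p => [|p IH]; first by rewrite expr0 mulmx1.
rewrite exprSr -[A ^+ p * A]/(A ^+ p *m A) mulmxA.
apply: submx_trans iX; exact: submxMr.
Qed.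

Lemma surj_pow U p : inv U -> row_full (U + A)%MS -> row_full (U + A ^+ p)%MS.
Proof.
move=> iU fU; rewrite -sub1mx in fU; rewrite -sub1mx.
elim: p => [|p IH]; first by rewrite expr0 addsmxSr.
apply: submx_trans fU _; rewrite addsmx_sub addsmxSl /=.
have h : (1%:M *m A <= (U + A ^+ p)%MS *m A)%MS by apply: submxMr.
rewrite mul1mx in h; apply: submx_trans h _.
rewrite addsmxMr addsmx_sub; apply/andP; split.
  by apply: submx_trans iU _; exact: addsmxSl.
have -> : A ^+ p *m A = A ^+ p.+1 by rewrite exprSr.
exact: addsmxSr.
Qed.

Lemma surj_shift U (W : 'M[F]_N) p : inv U -> row_full (U + A)%MS -> row_full (U + W)%MS ->
  row_full (U + W *m A ^+ p)%MS.
Proof.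
move=> iU fU fW; have := surj_pow p iU fU; rewrite -!sub1mx => h.
apply: submx_trans h _; rewrite addsmx_sub addsmxSl /=.
have h2 : (1%:M *m A ^+ p <= (U + W)%MS *m A ^+ p)%MS by apply: submxMr; rewrite sub1mx.
rewrite mul1mx in h2; apply: submx_trans h2 _.
rewrite addsmxMr addsmx_sub addsmxSr andbT.
by apply: submx_trans (inv_pow p iU) _; exact: addsmxSl.
Qed.

Definition catS (s1 : nat -> {set 'I_L}) K1 (s2 : nat -> {set 'I_L}) e :=
  if (e < K1)%N then s1 e else s2 (e - K1)%N.

Lemma Wsch_cat s1 K1 s2 K2 :
  (Wsch s1 K1 + Wsch s2 K2 *m A ^+ K1 <= Wsch (catS s1 K1 s2) (K1 + K2))%MS.
Proof.
rewrite addsmx_sub; apply/andP; split.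
  apply/sumsmx_subP => e _.
  have eK : (e < K1 + K2)%N by apply: leq_trans (ltn_ord e) (leq_addr _ _).
  by have := term_Wsch (catS s1 K1 s2) eK; rewrite /catS ltn_ord.
rewrite sumsmxMr; apply/sumsmx_subP => e _.
have eK : (e + K1 < K1 + K2)%N by rewrite addnC ltn_add2l.
have := term_Wsch (catS s1 K1 s2) eK.
rewrite /catS ltnNge leq_addl /= addnK exprD.
by rewrite -[A ^+ e * A ^+ K1]/(A ^+ e *m A ^+ K1) mulmxA.
Qed.

Definition Xb (U : 'M[F]_N) T e : 'M[F]_N := (U + Wsch (fun _ => T) e)%MS.

Lemma Xb_mono U T e : (Xb U T e <= Xb U T e.+1)%MS.
Proof.
apply: addsmxS => //; apply/sumsmx_subP => i _.
have iK : (i < e.+1)%N by rewrite ltnS ltnW.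
by have /= := term_Wsch (fun=> T) iK.
Qed.

Lemma Xb_mulA U T e : inv U -> (Xb U T e *m A <= Xb U T e.+1)%MS.
Proof.
move=> iU; rewrite addsmxMr addsmx_sub; apply/andP; split.
  by apply: submx_trans iU _; exact: addsmxSl.
rewrite sumsmxMr; apply/sumsmx_subP => i _.
apply: submx_trans _ (addsmxSr _ _).
have iK : (i.+1 < e.+1)%N by rewrite ltnS.
have /= := term_Wsch (fun=> T) iK; rewrite exprSr.
by rewrite -[A ^+ i * A]/(A ^+ i *m A) mulmxA.
Qed.

Lemma block U T : inv U -> exists e, [/\ (0 < e)%N, inv (Xb U T e) &
   (\rank (Xb U T 1) + e <= \rank (Xb U T e) + 1)%N].
Proof.
move=> iU.
suff H : forall k, (exists e, [/\ (0 < e)%N, inv (Xb U T e) &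
   (\rank (Xb U T 1) + e <= \rank (Xb U T e) + 1)%N]) \/
   (\rank (Xb U T 1) + k <= \rank (Xb U T k.+1))%N.
  case: (H N.+1) => // h; exfalso.
  have := rank_leq_col (Xb U T N.+2); move: h; lia.
elim=> [|k [IH|IH]]; [by right; rewrite addn0 | by left |].
case: (boolP (Xb U T k.+2 <= Xb U T k.+1)%MS) => hle.
  left; exists k.+1; split => //.
    by rewrite /inv; apply: submx_trans (Xb_mulA _ _ iU) hle.
  by rewrite addnS addn1 ltnS.
right; rewrite addnS.
have h := Xb_mono U T k.+1.
have : (\rank (Xb U T k.+1) < \rank (Xb U T k.+2))%N.
  by have := ltmxErank (Xb U T k.+1) (Xb U T k.+2); rewrite ltmxE h hle /= => <-.
exact: leq_ltn_trans IH.
Qed.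

End Sched.
Section Sched2.
Variables (F : fieldType) (N L : nat) (A : 'M[F]_N) (G : 'M[F]_(L, N)).
Local Notation VT := (VT G).
Local Notation Wsch := (Wsch A G).
Local Notation inv := (inv A).
Local Notation Xb := (Xb A G).
Hypothesis ctrl : forall X : 'M[F]_N, inv X -> (G <= X)%MS -> row_full X.

Lemma full_sched (U : 'M[F]_N) : row_full U ->
  exists (sg : nat -> {set 'I_L}) K, [/\ (K + \rank U <= N)%N, (forall e, #|sg e| <= 1)%N & row_full (U + Wsch sg K)%MS].
Proof.
move=> fU; exists (fun _ => set0), 0%N; split => //.
- by rewrite add0n rank_leq_col.
- by move=> e; rewrite cards0.
- by rewrite -sub1mx; apply: submx_trans (addsmxSl _ _); rewrite sub1mx.
Qed.

Lemma schedP_aux m : forall U : 'M[F]_N, (N - \rank U <= m)%N -> inv U -> row_full (U + A)%MS ->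
  exists (sg : nat -> {set 'I_L}) K, [/\ (K + \rank U <= N)%N, (forall e, #|sg e| <= 1)%N & row_full (U + Wsch sg K)%MS].
Proof.
elim: m => [|m IH] U hm iU fU.
  apply: full_sched; rewrite /row_full eqn_leq rank_leq_col /=; move: hm; lia.
case: (boolP (row_full U)) => nfU; first exact: full_sched.
have : ~~ (G <= U)%MS by apply/negP => h; move: nfU; rewrite (ctrl iU h).
case/row_subPn => j hj.
set T := [set j].
have [e [e0 iX hr]] := block G T iU.
have X1U : (\rank U < \rank (Xb U T 1))%N.
  suff h1 : (U < Xb U T 1)%MS by move: h1; rewrite ltmxErank => /andP[].
  rewrite ltmxE addsmxSl /=; apply/negP => h; move/negP: hj; apply.
  apply: submx_trans h; apply: submx_trans (addsmxSr _ _).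
  have := term_Wsch A G (fun=> T) (ltnSn 0); rewrite /= expr0 mulmx1 => h2.
  by apply: submx_trans h2; apply: row_VT; rewrite inE.
set U' := Xb U T e.
have UU' : (U <= U')%MS by exact: addsmxSl.
have fU' : row_full (U' + A)%MS.
  by rewrite -sub1mx; apply: submx_trans (addsmxS UU' (submx_refl A)); rewrite sub1mx.
have hm' : (N - \rank U' <= m)%N.
  by rewrite /U'; move: hm X1U hr e0; lia.
have [sg2 [K2 [hK2 hc2 hf2]]] := IH U' hm' iX fU'.
exists (catS (fun=> T) e sg2), (e + K2)%N; split.
- by move: hK2 hr X1U e0; rewrite /U'; lia.
- by move=> e'; rewrite /catS; case: ifP => _ //; rewrite cards1.
- have h := surj_shift e iX fU' hf2.
  rewrite -sub1mx; rewrite -sub1mx in h; apply: submx_trans h _.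
  apply: submx_trans _ (addsmxS (submx_refl U) (Wsch_cat A G _ _ _ _)).
  by rewrite /U' /Xb addsmxA submx_refl.
Qed.

Lemma schedP (U : 'M[F]_N) : inv U -> row_full (U + A)%MS ->
  exists (sg : nat -> {set 'I_L}) K, [/\ (K + \rank U <= N)%N, (forall e, #|sg e| <= 1)%N & row_full (U + Wsch sg K)%MS].
Proof. exact: (@schedP_aux (N - \rank U) U (leqnn _)). Qed.

Lemma first_block T0 : row_full (VT T0 + A)%MS ->
  exists sg K, [/\ (K + \rank (VT T0) <= N.+1)%N,
    (forall e, sg e = T0 \/ (#|sg e| <= 1)%N) & row_full (Wsch sg K)].
Proof.
move=> f0.
have i0 : inv (0 : 'M[F]_N) by rewrite /inv mul0mx sub0mx.
have [e [e0 iX hr]] := block G T0 i0.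
have V1 : (VT T0 <= Xb 0 T0 1)%MS.
  apply: submx_trans (addsmxSr _ _).
  by have := term_Wsch A G (fun=> T0) (ltnSn 0); rewrite /= expr0 mulmx1.
have Ve : (VT T0 <= Xb 0 T0 e)%MS.
  apply: submx_trans (addsmxSr _ _).
  by have := term_Wsch A G (fun=> T0) e0; rewrite /= expr0 mulmx1.
set U' := Xb 0 T0 e.
have fU' : row_full (U' + A)%MS.
  by rewrite -sub1mx; apply: submx_trans (addsmxS Ve (submx_refl A)); rewrite sub1mx.
have [sg2 [K2 [hK2 hc2 hf2]]] := schedP iX fU'.
exists (catS (fun=> T0) e sg2), (e + K2)%N; split.
- by have := mxrankS V1; move: hK2 hr; rewrite /U'; lia.
- by move=> e'; rewrite /catS; case: ifP => _; [left | right].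
- have h := surj_shift e iX fU' hf2.
  rewrite -sub1mx; rewrite -sub1mx in h; apply: submx_trans h _.
  apply: submx_trans _ (Wsch_cat A G _ _ _ _).
  by rewrite /U' /Xb adds0mx_id submx_refl.
Qed.

End Sched2.
Lemma blocks_exist (L s m : nat) (S B0 : {set 'I_L}) :
  (0 < s)%N -> B0 \subset S -> (#|B0| <= s)%N -> (#|S| <= m * s)%N ->
  exists blk : nat -> {set 'I_L}, [/\ forall i, (#|blk i| <= s)%N,
     forall x, x \in S -> exists2 i, (i < m)%N & x \in blk i
   & B0 \subset blk 0%N].
Proof.
move=> s0 BS B0s Sms.
set l := enum B0 ++ enum (S :\: B0).
have meml x : x \in S -> x \in l.
  move=> xS; rewrite mem_cat !mem_enum in_setD xS andbT.
  by case: (x \in B0).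
have sizel : size l = #|S|.
  by rewrite size_cat -!cardE -(cardsID B0 S) (setIidPr BS).
exists (fun i => [set x in S | (index x l %/ s == i)%N]); split.
- move=> i; case: s s0 {B0s Sms} => // s' _.
  set B := [set x in S | _].
  have inj : {in B &, injective (fun x => (inord (index x l %% s'.+1) : 'I_s'.+1))}.
    move=> x y; rewrite !inE => /andP[xS /eqP xi] /andP[yS /eqP yi] /= h.
    have : (index x l %% s'.+1 = index y l %% s'.+1)%N.
      by move/(congr1 val): h; rewrite /= !inordK // ltn_mod.
    move=> hm; have hxy : index x l = index y l.
      by rewrite (divn_eq (index x l) s'.+1) (divn_eq (index y l) s'.+1) xi yi hm.
    by rewrite -(nth_index x (meml x xS)) hxy nth_index ?meml.
  by rewrite -(card_in_imset inj) -[X in (_ <= X)%N]card_ord max_card.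
- move=> x xS; exists (index x l %/ s)%N; last by rewrite inE xS eqxx.
  rewrite ltn_divLR //; apply: leq_trans Sms; rewrite -sizel index_mem; exact: meml.
- apply/subsetP => x xB; rewrite inE (subsetP BS x xB) /= divn_small //.
  rewrite /l index_cat mem_enum xB.
  by apply: leq_trans B0s; rewrite cardE index_mem mem_enum.
Qed.

Section QBound.
Variables (F : fieldType) (N L : nat) (A : 'M[F]_N) (G : 'M[F]_(L, N)).
Local Notation VT := (VT G).
Local Notation Wsch := (Wsch A G).
Local Notation inv := (inv A).
Variable q : nat.
Hypothesis q0 : (0 < q)%N.
Hypothesis Hq : forall X : 'M[F]_N, (X *m A ^+ q <= \sum_(j < q) X *m A ^+ j)%MS.

Definition Kr T := Wsch (fun=> T) q.

Lemma Kr_inv T : inv (Kr T).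
Proof.
rewrite /inv /Kr /Wsch sumsmxMr; apply/sumsmx_subP => j _.
rewrite -mulmxA -[A ^+ j *m A]/(A ^+ j * A) -exprSr.
case: (ltnP j.+1 q) => hj; first exact: (term_Wsch A G (fun=> T) hj).
have -> : j.+1 = q by apply/eqP; rewrite eqn_leq hj ltn_ord.
apply: submx_trans (Hq (VT T)) _; apply/sumsmx_subP => k _.
exact: (term_Wsch A G (fun=> T) (ltn_ord k)).
Qed.

Lemma VT_Kr T : (VT T <= Kr T)%MS.
Proof. by have := term_Wsch A G (fun=> T) q0; rewrite /= expr0 mulmx1. Qed.

Lemma qsched (S B0 : {set 'I_L}) (blk : nat -> {set 'I_L}) m :
  (forall X, inv X -> (VT S <= X)%MS -> row_full X) ->
  row_full (VT B0 + A)%MS -> B0 \subset blk 0%N ->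
  (forall x, x \in S -> exists2 i, (i < m)%N & x \in blk i) ->
  row_full (Wsch (fun e => blk (e %/ q)%N) (q * m)).
Proof.
move=> ctrlS f0 B0b cov.
set sg := fun e => blk (e %/ q)%N.
have termW i j : (i < m)%N -> (j < q)%N ->
    (VT (blk i) *m A ^+ j *m A ^+ (i * q) <= Wsch sg (q * m))%MS.
  move=> im jq.
  have lt : (i * q + j < q * m)%N.
    apply: leq_trans (_ : i * q + q <= q * m)%N; first by rewrite ltn_add2l.
    by rewrite -mulSnr mulnC leq_mul2l im orbT.
  have := term_Wsch A G sg lt.
  rewrite /sg divnMDl // (divn_small jq) addn0 addnC exprD.
  by rewrite -[A ^+ j * A ^+ (i * q)]/(A ^+ j *m A ^+ (i * q)) mulmxA.
have KrW i : (i < m)%N -> (Kr (blk i) *m A ^+ (i * q) <= Wsch sg (q * m))%MS.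
  move=> im; rewrite /Kr /Wsch sumsmxMr; apply/sumsmx_subP => j _.
  exact: termW.
set Z := (\sum_(i < m) Kr (blk i))%MS.
have iZ : inv Z.
  rewrite /inv /Z sumsmxMr; apply/sumsmx_subP => i _.
  apply: submx_trans (Kr_inv _) _; exact: (sumsmx_sup i).
have SZ : (VT S <= Z)%MS.
  apply/VT_subP => x xS; have [i im xi] := cov x xS.
  apply: submx_trans (row_VT G xi) _; apply: submx_trans (VT_Kr _) _.
  exact: (sumsmx_sup (Ordinal im)).
have fZ := ctrlS Z iZ SZ.
have [m0|m0] := posnP m.
  move: fZ; rewrite /Z m0 big_ord0 -!sub1mx => h.
  by apply: submx_trans h _; rewrite sub0mx.
have fK0 : row_full (Kr (blk 0) + A)%MS.
  rewrite -sub1mx; apply: submx_trans (_ : (1%:M <= VT B0 + A)%MS) _; first by rewrite sub1mx.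
  apply: addsmxS => //; apply: submx_trans (VT_Kr _); exact: VT_mono.
have fKZ : row_full (Kr (blk 0) + Z)%MS.
  by rewrite -sub1mx; apply: submx_trans (addsmxSr _ _); rewrite sub1mx.
have := surj_shift (m.-1 * q) (Kr_inv _) fK0 fKZ.
rewrite -!sub1mx => h; apply: submx_trans h _.
rewrite addsmx_sub; apply/andP; split.
  by have := KrW 0%N m0; rewrite mul0n expr0 mulmx1.
rewrite /Z sumsmxMr; apply/sumsmx_subP => i _.
apply: submx_trans (KrW i (ltn_ord i)).
have -> : (m.-1 * q = (m.-1 - i) * q + i * q)%N.
  by rewrite -mulnDl subnK //; move: (ltn_ord i) m0; lia.
rewrite exprD -[A ^+ _ * A ^+ _]/(A ^+ ((m.-1 - i) * q) *m A ^+ (i * q)) mulmxA.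
apply: submxMr; exact: inv_pow (Kr_inv _).
Qed.
End QBound.
Lemma poly_nonroot (R : numDomainType) (P : {poly R}) : P != 0 ->
  exists t : R, P.[t] != 0.
Proof.
move=> P0.
set rs := [seq (k%:R : R) | k <- iota 0 (size P)].
have : ~~ all (root P) rs.
  apply/negP => hall.
  have hu : uniq rs.
    rewrite map_inj_uniq ?iota_uniq // => a b /eqP; rewrite eqr_nat => /eqP.
    done.
  by have := max_poly_roots P0 hall hu; rewrite size_map size_iota ltnn.
case/allPn => t _ ht; exists t; exact: ht.
Qed.

Lemma fin_union (R : numFieldType) (I : finType) (n : nat) (M : I -> 'M[R]_n) :
  (forall y : 'rV[R]_n, exists i, (y <= M i)%MS) -> exists i, row_full (M i).
Proof.
move=> cov.
case: n M cov => [|n] M cov.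
  have [i _] := cov 0; exists i; by rewrite /row_full eqn_leq rank_leq_col.
case: (boolP [exists i, row_full (M i)]) => [/existsP//|/existsPn nf].
exfalso.
have nz i : exists ab : 'I_n.+1 * 'I_n.+1, cokermx (M i) ab.1 ab.2 != 0.
  case: (boolP (cokermx (M i) == 0)) => h.
    by move: (nf i); rewrite -sub1mx submxE (eqP h) mulmx0 eqxx.
  have : [exists a, [exists b, cokermx (M i) a b != 0]].
    case: (boolP [exists a, [exists b, cokermx (M i) a b != 0]]) => // /existsPn H.
    move/eqP: h => h; exfalso; apply: h; apply/matrixP => a b.
    by move: (H a) => /existsPn /(_ b) /negPn /eqP ->; rewrite mxE.
  by case/existsP => a /existsP [b hb]; exists (a, b).
have [ab hab] := fin_all_exists nz.
set p := fun i => \poly_(k < n.+1) cokermx (M i) (inord k) (ab i).2.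
have p0 i : p i != 0.
  apply/eqP => /(congr1 (fun q : {poly R} => q`_(ab i).1)).
  rewrite coef_poly ltn_ord inord_val coef0; apply/eqP; exact: hab.
have P0 : \prod_i p i != 0 by apply/prodf_neq0 => i _; exact: p0.
have [t ht] := poly_nonroot P0.
have [i hi] := cov (\row_k (t ^+ k)).
move: hi; rewrite submxE => /eqP /matrixP /(_ 0 (ab i).2).
rewrite !mxE => h.
move: ht; rewrite horner_prod (bigD1 i) //= => /negP; apply.
suff -> : (p i).[t] = 0 by rewrite mul0r.
rewrite horner_poly -[X in _ = X]h; apply: eq_bigr => k _; rewrite !mxE inord_val mulrC.
done.
Qed.
Section Indep.
Variables (F : fieldType) (N L : nat) (G : 'M[F]_(L, N)).
Local Notation VT := (VT G).

Lemma indep_rank (U : 'M[F]_N) n : forall T : {set 'I_L}, #|T| = n ->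
  (forall i, i \in T -> ~~ (row i G <= VT (T :\ i) + U)%MS) ->
  (\rank U + #|T| <= \rank (VT T + U))%N.
Proof.
elim: n => [|n IH] T cT hT.
  by rewrite cT addn0; apply: mxrankS; exact: addsmxSr.
have [i iT] : exists i, i \in T.
  by apply/set0Pn; apply/eqP => T0; move: cT; rewrite T0 cards0.
set T' := T :\ i.
have cT' : #|T'| = n by move: cT; rewrite (cardsD1 i T) iT add1n => -[].
have hT' : forall k, k \in T' -> ~~ (row k G <= VT (T' :\ k) + U)%MS.
  move=> k; rewrite inE => /andP[ki kT]; apply: contra (hT k kT) => h.
  apply: submx_trans h _; apply: addsmxS => //; apply: VT_mono.
  by apply/subsetP => x; rewrite !inE => /andP[-> /andP[_ ->]].
have := IH T' cT' hT'.
have sub : (VT T' + U <= VT T + U)%MS.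
  by apply: addsmxS => //; apply: VT_mono; exact: subsetDl.
have lt : (\rank (VT T' + U) < \rank (VT T + U))%N.
  suff : (VT T' + U < VT T + U)%MS by rewrite ltmxErank => /andP[].
  rewrite ltmxE sub /=; apply: contra (hT i iT) => h.
  apply: submx_trans h; apply: submx_trans (addsmxSl _ _); exact: row_VT.
rewrite (cardsD1 i T) iT; move: lt; rewrite -/T'; lia.
Qed.

Lemma select_sub (S : {set 'I_L}) (U : 'M[F]_N) :
  row_full (VT S + U)%MS ->
  exists2 B : {set 'I_L}, B \subset S & (#|B| + \rank U <= N)%N /\ row_full (VT B + U)%MS.
Proof.
move=> fS.
case: (@arg_minnP _ S (fun B : {set 'I_L} => (B \subset S) && row_full (VT B + U)%MS) (fun B : {set 'I_L} => #|B|)).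
  by rewrite subxx fS.
move=> B /andP[BS fB] hmin; exists B => //; split => //.
have hB : forall i, i \in B -> ~~ (row i G <= VT (B :\ i) + U)%MS.
  move=> i iB; apply/negP => h.
  have : (B :\ i \subset S) && row_full (VT (B :\ i) + U)%MS.
    rewrite (subset_trans (subsetDl _ _) BS) /= -sub1mx.
    apply: submx_trans (_ : (1%:M <= VT B + U)%MS) _; first by rewrite sub1mx.
    rewrite addsmx_sub addsmxSr andbT; apply/VT_subP => k kB.
    case: (eqVneq k i) => [-> //|ki].
    by apply: submx_trans (addsmxSl _ _); apply: row_VT; rewrite !inE ki.
  move/hmin; rewrite (cardsD1 i B) iB; lia.
have := indep_rank (erefl #|B|) hB.
move: fB; rewrite /row_full => /eqP ->; lia.
Qed.

Lemma extend_set (T1 : {set 'I_L}) s : (#|T1| <= s)%N ->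
  exists T0 : {set 'I_L}, [/\ (#|T0| <= s)%N, (VT T1 <= VT T0)%MS &
     (minn (\rank G) s <= \rank (VT T0))%N].
Proof.
move=> c1.
case: (@arg_minnP _ T1 (fun B : {set 'I_L} => (B \subset T1) && (VT T1 <= VT B)%MS) (fun B : {set 'I_L} => #|B|)).
  by rewrite subxx submx_refl.
move=> B1 /andP[B1T hB1] hmin.
have indB1 : \rank (VT B1) = #|B1|.
  apply/eqP; rewrite eqn_leq rank_VT_card /=.
  have hB : forall i, i \in B1 -> ~~ (row i G <= VT (B1 :\ i) + (0 : 'M[F]_N))%MS.
    move=> i iB; apply/negP; rewrite addsmx0 => h.
    have : (B1 :\ i \subset T1) && (VT T1 <= VT (B1 :\ i))%MS.
      rewrite (subset_trans (subsetDl _ _) B1T) /=.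
      apply: submx_trans hB1 _; apply/VT_subP => k kB.
      case: (eqVneq k i) => [-> //|ki].
      by apply: row_VT; rewrite !inE ki.
    move/hmin; rewrite (cardsD1 i B1) iB; lia.
  have := indep_rank (erefl #|B1|) hB.
  by rewrite mxrank0 add0n addsmx0.
have cB1 : (#|B1| <= s)%N by apply: leq_trans c1; exact: subset_leq_card.
case: (@arg_maxnP _ B1 (fun T : {set 'I_L} => (B1 \subset T) && (#|T| <= s)%N && (\rank (VT T) == #|T|))
   (fun T : {set 'I_L} => #|T|)).
  by rewrite subxx cB1 indB1 eqxx.
move=> T0 /andP[/andP[BT0 c0] /eqP r0] hmax.
exists T0; split => //.
  by apply: submx_trans hB1 _; exact: VT_mono.
case: (ltnP #|T0| s) => cs; last by rewrite r0; apply: leq_trans (geq_minr _ _) cs.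
case: (ltnP (\rank (VT T0)) (\rank G)) => rg; last by apply: leq_trans (geq_minl _ _) rg.
exfalso.
have : ~~ (G <= VT T0)%MS by apply: contraL rg => /mxrankS; rewrite leqNgt.
case/row_subPn => j hj.
have jT0 : j \notin T0 by apply: contra hj; exact: row_VT.
have c3 : \rank (VT (j |: T0)) == #|j |: T0|.
  rewrite eqn_leq rank_VT_card /= cardsU1 jT0 add1n -r0.
  suff : (VT T0 < VT (j |: T0))%MS by rewrite ltmxErank => /andP[].
  rewrite ltmxE VT_mono ?subsetUr //=; apply: contra hj => h.
  by apply: submx_trans h; apply: row_VT; rewrite !inE eqxx.
have : (B1 \subset j |: T0) && (#|j |: T0| <= s)%N && (\rank (VT (j |: T0)) == #|j |: T0|).
  by rewrite c3 andbT (subset_trans BT0 (subsetUr _ _)) cardsU1 jT0 add1n cs.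
by move/hmax; rewrite cardsU1 jT0 add1n; lia.
Qed.
End Indep.
Section Sys.
Variables (R : realType) (n L : nat) (D : 'M[R]_n.+1) (H : 'M[R]_(n.+1, L)) (s : nat).
Local Notation N := n.+1.
Local Notation A := (D^T).
Local Notation G := (H^T).
Local Notation VT := (VT G).

Definition supp (h : 'cV[R]_L) : {set 'I_L} := [set j | h j 0 != 0].

Lemma l0norm_supp h : l0norm h = #|supp h|.
Proof. by []. Qed.

Lemma trX (M : 'M[R]_N) k : (M ^+ k)^T = M^T ^+ k.
Proof.
elim: k => [|k IH]; first by rewrite !expr0 trmx1.
rewrite exprS exprSr -[M * M ^+ k]/(M *m M ^+ k) trmx_mul IH.
done.
Qed.

Lemma state_trS x0 hs k :
  (state D H x0 hs k.+1)^T = (state D H x0 hs k)^T *m A + (hs k)^T *m G.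
Proof. by rewrite /= linearD /= !trmx_mul. Qed.

Lemma state_tr_sub x0 hs k (X : 'M[R]_N) : inv A X -> (x0^T <= X)%MS -> (G <= X)%MS ->
  ((state D H x0 hs k)^T <= X)%MS.
Proof.
move=> iX h0 hG; elim: k => [//|k IH].
rewrite state_trS addmx_sub //; last exact: mulmx_sub.
by apply: submx_trans iX; exact: submxMr.
Qed.

Lemma SC_ctrl : sparse_controllable D H s ->
  forall X : 'M[R]_N, inv A X -> (G <= X)%MS -> row_full X.
Proof.
move=> sc X iX hG; rewrite -sub1mx; apply/row_subP => i.
have [K [hs [_ hK]]] := sc 0 (row i 1%:M)^T.
rewrite -(trmxK (row i 1%:M)) -hK; apply: state_tr_sub => //.
by rewrite trmx0 sub0mx.
Qed.

Lemma supp_VT (h : 'cV[R]_L) : (h^T *m G <= VT (supp h))%MS.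
Proof. by apply: mulG_VT => j; rewrite inE negbK mxE => /eqP. Qed.

Lemma state_last hs k : ((state D H 0 hs k.+1)^T <= VT (supp (hs k)) + A)%MS.
Proof.
rewrite addsmxC state_trS addmx_sub_adds //; last exact: supp_VT.
exact: submxMl.
Qed.

Definition capT (T : {set 'I_L}) := if (#|T| <= s)%N then T else set0.

Lemma capT_card T : (#|capT T| <= s)%N.
Proof. by rewrite /capT; case: ifP => // _; rewrite cards0. Qed.

Lemma SC2 : sparse_controllable D H s ->
  exists T1 : {set 'I_L}, (#|T1| <= s)%N /\ row_full (VT T1 + A)%MS.
Proof.
move=> sc.
have cov : forall y : 'rV[R]_N, exists T : {set 'I_L}, (y <= VT (capT T) + A)%MS.
  move=> y; have [K [hs [hK hx]]] := sc 0 y^T.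
  case: K hK hx => [|K] hK hx.
    by exists set0; rewrite -(trmxK y) -hx /= trmx0 sub0mx.
  exists (supp (hs K)); rewrite /capT -l0norm_supp hK // -(trmxK y) -hx.
  exact: state_last.
have [T fT] := fin_union cov.
by exists (capT T); rewrite capT_card.
Qed.

End Sys.
Lemma rank_sumsmx (F : fieldType) (N K : nat) (B : 'I_K -> 'M[F]_N) :
  (\rank (\sum_(i < K) B i)%MS <= \sum_(i < K) \rank (B i))%N.
Proof.
elim: K B => [|K IH] B; first by rewrite !big_ord0 mxrank0.
rewrite !big_ord_recr /=.
apply: leq_trans (mxrank_adds_leqif _ _) _.
by rewrite leq_add2r IH.
Qed.

Section Sys2.
Variables (R : realType) (n L : nat) (D : 'M[R]_n.+1) (H : 'M[R]_(n.+1, L)) (s : nat).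
Local Notation N := n.+1.
Local Notation A := (D^T).
Local Notation G := (H^T).
Local Notation VT := (VT G).

Lemma state0_sum hs k :
  ((state D H 0 hs k)^T <= \sum_(i < k) VT (supp (hs i)) *m A ^+ (k - i.+1))%MS.
Proof.
elim: k => [|k IH]; first by rewrite /= trmx0 sub0mx.
rewrite state_trS addmx_sub //.
  apply: submx_trans (submxMr _ IH) _; rewrite sumsmxMr.
  apply/sumsmx_subP => i _.
  have ik : (i < k.+1)%N by apply: ltnW; rewrite ltnS.
  apply: (sumsmx_sup (Ordinal ik)) => //=.
  rewrite -mulmxA -[A ^+ _ *m A]/(A ^+ (k - i.+1) * A) -exprSr.
  by rewrite subSn ?ltn_ord.
apply: (sumsmx_sup ord_max) => //=.
by rewrite subnn expr0 mulmx1; exact: supp_VT.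
Qed.

Lemma lower_bound K : steerable_in D H s K -> (N <= K * minn (\rank H) s)%N.
Proof.
move=> st.
set M := fun sg : {ffun 'I_K -> {set 'I_L}} =>
  (\sum_(i < K) VT (capT s (sg i)) *m A ^+ (K - i.+1))%MS.
have cov : forall y : 'rV[R]_N, exists sg, (y <= M sg)%MS.
  move=> y; have [hs [hs_s hx]] := st 0 y^T.
  exists [ffun i : 'I_K => supp (hs i)].
  rewrite -(trmxK y) -hx; apply: submx_trans (state0_sum _ _) _.
  apply/sumsmx_subP => i _; apply: (sumsmx_sup i) => //.
  by rewrite ffunE /capT -l0norm_supp hs_s.
have [sg fsg] := fin_union cov.
apply: leq_trans (_ : (N <= \rank (M sg))%N) _.
  by move: fsg; rewrite /row_full => /eqP ->.
apply: leq_trans (rank_sumsmx _) _.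
rewrite -[X in (_ <= X * _)%N]card_ord -sum_nat_const.
apply: leq_sum => i _.
apply: leq_trans (mxrankM_maxl _ _) _.
rewrite leq_min; apply/andP; split.
  by rewrite -(mxrank_tr H); exact: rank_VT_G.
exact: leq_trans (rank_VT_card _ _) (capT_card _ _).
Qed.

End Sys2.
Section Sys3.
Variables (R : realType) (n L : nat) (D : 'M[R]_n.+1) (H : 'M[R]_(n.+1, L)) (s : nat).
Local Notation N := n.+1.
Local Notation A := (D^T).
Local Notation G := (H^T).
Local Notation VT := (VT G).

Lemma state_closed x0 hs k : (state D H x0 hs k)^T =
  x0^T *m A ^+ k + \sum_(i < k) (hs i)^T *m G *m A ^+ (k - i.+1).
Proof.
elim: k => [|k IH]; first by rewrite big_ord0 addr0 expr0 mulmx1.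
rewrite state_trS IH mulmxDl big_ord_recr /= subnn expr0 mulmx1 addrA.
congr (_ + _); rewrite -mulmxA -[A ^+ k *m A]/(A ^+ k * A) -exprSr.
congr (_ + _); rewrite mulmx_suml; apply: eq_bigr => i _ /=.
rewrite -mulmxA -[A ^+ _ *m A]/(A ^+ (k - i.+1) * A) -exprSr.
by rewrite subSn ?ltn_ord.
Qed.

Lemma steer (sg : nat -> {set 'I_L}) K :
  (forall e, (e < K)%N -> (#|sg e| <= s)%N) -> row_full (Wsch A G sg K) ->
  steerable_in D H s K.
Proof.
case: K => [|K'] hsg fW x0 xf.
  by move: fW; rewrite /row_full /Wsch big_ord0 mxrank0.
set y := (xf - D ^+ K'.+1 *m x0)^T.
have : (y <= Wsch A G sg K'.+1)%MS by apply: submx_full.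
case/sub_sumsmxP => u hy.
have hv : forall e : 'I_K'.+1, exists v : 'rV[R]_L,
    (forall j, j \notin sg e -> v 0 j = 0) /\
    u e *m (VT (sg e) *m A ^+ e) = v *m G *m A ^+ e.
  move=> e; have [v [hv1 hv2]] := VT_decomp (submxMl (u e) (VT (sg e))).
  by exists v; split => //; rewrite mulmxA hv2.
have [v hv'] := fin_all_exists hv.
set hs := fun i => if (i < K'.+1)%N then (v (inord (K' - i)))^T else 0.
exists hs; split.
  move=> i iK; rewrite l0norm_supp /hs iK.
  apply: leq_trans (hsg (inord (K' - i) : 'I_K'.+1) (ltn_ord _)).
  apply: subset_leq_card; apply/subsetP => j; rewrite inE mxE.
  by apply: contraR => /(proj1 (hv' _)) ->.
apply: trmx_inj; rewrite state_closed.
have Hsum : \sum_(i < K'.+1) (hs i)^T *m G *m A ^+ (K'.+1 - i.+1) = y.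
  rewrite hy (reindex_inj rev_ord_inj) /=; apply: eq_bigr => j _.
  rewrite (proj2 (hv' j)) /hs /= subSS.
  have e0 : (K' - j < K'.+1)%N by rewrite ltnS leq_subr.
  have e1 : (K' - (K' - j) = j)%N by rewrite subKn // -ltnS.
  by rewrite e0 trmxK subSS e1 inord_val.
rewrite Hsum /y linearD /= linearN /= trmx_mul trX addrC subrK.
done.
Qed.
End Sys3.
Lemma eigen_sub (C : closedFieldType) (N : nat) (Z Dc : 'M[C]_N) :
  Z != 0 -> (Z *m Dc <= Z)%MS ->
  exists lam, exists w : 'rV[C]_N, [/\ w != 0, (w <= Z)%MS & w *m Dc = lam *: w].
Proof.
move=> Z0 ZD.
set B := row_base Z.
have BD : (B *m Dc <= B)%MS.
  rewrite eq_row_base; apply: submx_trans ZD; apply: submxMr.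
  by rewrite eq_row_base.
case/submxP: BD => M hM.
have : size (char_poly M) != 1%N.
  rewrite size_char_poly eqSS; apply: contra Z0 => /eqP h.
  by rewrite -mxrank_eq0 h.
case/closed_rootP => lam; rewrite -eigenvalue_root_char => /eigenvalueP [v hv v0].
exists lam, (v *m B); split.
- by rewrite mulmx_free_eq0 ?row_base_free.
- by apply: submx_trans (submxMl _ _) _; rewrite eq_row_base.
- by rewrite -mulmxA hM mulmxA hv scalemxAl.
Qed.

Section Cplx.
Variables (R : realType) (n L : nat) (D : 'M[R]_n.+1) (H : 'M[R]_(n.+1, L)) (s : nat).
Local Notation N := n.+1.
Local Notation A := (D^T).
Local Notation G := (H^T).
Local Notation VT := (VT G).
Local Notation f := (real_complex R).

Lemma tr_colsub_set (S : {set 'I_L}) :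
  (colsub_set H S)^T = rowsub (fun j : 'I_#|S| => enum_val j) G.
Proof. by apply/matrixP => i j; rewrite !mxE. Qed.

Lemma colsub_VT (S : {set 'I_L}) : ((colsub_set H S)^T <= VT S)%MS.
Proof. by rewrite tr_colsub_set -VT_rowsub submx_refl. Qed.

Lemma scalar0 m : (0 : R[i])%:M = 0 :> 'M[R[i]]_m.
Proof. by apply/matrixP => i j; rewrite !mxE mul0rn. Qed.

Lemma pbh_zero (S : {set 'I_L}) : PBH_full D H S -> row_full (VT S + A)%MS.
Proof.
move=> pbh; have := pbh 0; rewrite scalar0 subr0 -map_row_mx mxrank_map -mxrank_tr.
rewrite tr_row_mx -addsmxE => h.
have f1 : row_full (A + (colsub_set H S)^T)%MS by rewrite /row_full h.
rewrite addsmxC -sub1mx; apply: submx_trans (_ : (1%:M <= A + (colsub_set H S)^T)%MS) _.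
  by rewrite sub1mx.
by apply: addsmxS => //; exact: colsub_VT.
Qed.

Lemma pbh_ctrl (S : {set 'I_L}) : PBH_full D H S ->
  forall X : 'M[R]_N, inv A X -> (VT S <= X)%MS -> row_full X.
Proof.
move=> pbh X iX hS; apply/negPn/negP => nX.
set Z := kermx X^T.
have Z0 : Z != 0.
  rewrite -mxrank_eq0 mxrank_ker mxrank_tr; move: nX; rewrite /row_full.
  by have := rank_leq_col X; lia.
have ZD : (Z *m D <= Z)%MS.
  apply/sub_kermxP; case/submxP: iX => M hM.
  have e : D *m X^T = X^T *m M^T by rewrite -[D]trmxK -trmx_mul hM trmx_mul.
  by rewrite -mulmxA e mulmxA /Z mulmx_ker mul0mx.
have Zc0 : map_mx f Z != 0 by rewrite map_mx_eq0.
have ZDc : (map_mx f Z *m map_mx f D <= map_mx f Z)%MS by rewrite -map_mxM map_submx.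
have [lam [w [w0 wZ wD]]] := eigen_sub Zc0 ZDc.
have ZH : Z *m colsub_set H S = 0.
  have : ((colsub_set H S)^T <= X)%MS by apply: submx_trans hS; exact: colsub_VT.
  case/submxP => Y hY.
  by rewrite -[colsub_set H S]trmxK hY trmx_mul mulmxA /Z mulmx_ker mul0mx.
have wH : w *m map_mx f (colsub_set H S) = 0.
  case/submxP: wZ => u ->; by rewrite -mulmxA -map_mxM ZH map_mx0 mulmx0.
have := pbh lam.
have wk : (w <= kermx (row_mx (map_mx f D - lam%:M) (map_mx f (colsub_set H S))))%MS.
  apply/sub_kermxP; rewrite mul_mx_row mulmxBr wD wH mul_mx_scalar subrr.
  by rewrite row_mx0.
move=> hr; move: wk; rewrite -(mxrank_eq0 w) in w0.
move/mxrankS; rewrite mxrank_ker hr subnn leqn0.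
by move/eqP => h; move: w0; rewrite h.
Qed.

Lemma pbh_setT : sparse_controllable D H s -> PBH_full D H setT.
Proof.
move=> sc lam.
set M := row_mx (map_mx f D - lam%:M) (map_mx f (colsub_set H setT)).
apply/eqP; rewrite eqn_leq rank_leq_row /=; rewrite leqNgt; apply/negP => hlt.
have : kermx M != 0.
  by rewrite -mxrank_eq0 mxrank_ker subn_eq0 -ltnNge.
move=> kM.
have [w [w0 wM]] : exists w : 'rV[R[i]]_N, w != 0 /\ w *m M = 0.
  have : ~~ (kermx M <= (0 : 'M[R[i]]_N))%MS by rewrite submx0.
  case/row_subPn => i hi; exists (row i (kermx M)); split.
    by apply: contra hi => /eqP ->; rewrite sub0mx.
  by rewrite -row_mul mulmx_ker row0.
move: wM; rewrite mul_mx_row => /eqP; rewrite row_mx_eq0 => /andP[/eqP wD /eqP wH'].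
have wD' : w *m map_mx f D = lam *: w.
  by move/eqP: wD; rewrite mulmxBr mul_mx_scalar subr_eq0 => /eqP.
have wH : w *m map_mx f H = 0.
  apply/matrixP => i j; have jT : j \in [set: 'I_L] by rewrite inE.
  move/matrixP: wH' => /(_ i (enum_rank_in jT j)); rewrite !mxE => h.
  rewrite -[X in _ = X]h; apply: eq_bigr => k _.
  by rewrite /colsub_set !mxE (enum_rankK_in jT jT).
have wst : forall hs k, w *m map_mx f (state D H 0 hs k) = 0.
  move=> hs; elim=> [|k IH] /=; first by rewrite map_mx0 mulmx0.
  rewrite map_mxD !map_mxM mulmxDr !mulmxA wD' wH mul0mx addr0.
  by rewrite -scalemxAl IH scaler0.
move/negP: w0; apply; apply/eqP/matrixP => i j.
have [K [hs [_ hx]]] := sc 0 (delta_mx j 0).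
have := wst hs K; rewrite hx map_delta_mx -colE => /matrixP /(_ i 0).
by rewrite !mxE.
Qed.
End Cplx.
Lemma horner_mx_expand (F : fieldType) n' (M : 'M[F]_n'.+1) (p : {poly F}) :
  horner_mx M p = \sum_(i < size p) p`_i *: M ^+ i.
Proof.
rewrite -{1}[p]coefK poly_def rmorph_sum; apply: eq_bigr => i _ /=.
rewrite -[horner_mx M]/(horner_mx M) horner_mxZ.
by rewrite rmorphXn /= horner_mx_X.
Qed.

Lemma trXg (F : fieldType) m (M : 'M[F]_m) k : (M ^+ k)^T = M^T ^+ k.
Proof.
elim: k => [|k IH]; first by rewrite !expr0 trmx1.
rewrite exprS exprSr -[M * M ^+ k]/(M *m M ^+ k) trmx_mul IH.
done.
Qed.

Lemma minpoly_Hq (F : fieldType) n' (D : 'M[F]_n'.+1) (X : 'M[F]_n'.+1) :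
  (X *m D^T ^+ degree_mxminpoly D <= \sum_(j < degree_mxminpoly D) X *m D^T ^+ j)%MS.
Proof.
set q := degree_mxminpoly D.
have h0 := mx_root_minpoly D.
move: h0; rewrite horner_mx_expand size_mxminpoly big_ord_recr /=.
have -> : (mxminpoly D)`_q = 1.
  have := mxminpoly_monic D; rewrite monicE /lead_coef size_mxminpoly /=.
  by move/eqP.
rewrite scale1r => /(congr1 trmx); rewrite trmx0 linearD /= linear_sum /= trXg => h.
have e : D^T ^+ q = - \sum_(i < q) (mxminpoly D)`_i *: D^T ^+ i.
  apply/eqP; rewrite -addr_eq0 addrC -[X in _ == X]h; apply/eqP; congr (_ + _).
  by apply: eq_bigr => i _; rewrite linearZ /= trXg.
rewrite e mulmxN mulmx_sumr -sumrN; apply: summx_sub => i _.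
rewrite -scalemxAr -scaleNr; apply: scalemx_sub.
exact: (sumsmx_sup i).
Qed.
Definition decP (P : Prop) : bool :=
  if ClassicalEpsilon.excluded_middle_informative P then true else false.
Lemma decPP (P : Prop) : reflect P (decP P).
Proof. by rewrite /decP; case: ClassicalEpsilon.excluded_middle_informative => h; constructor. Qed.

Theorem theorem3 (R : realType) (n L s : nat) (D : 'M[R]_n.+1)
  (H : 'M[R]_(n.+1, L)) :
  (0 < s)%N -> (s <= L)%N ->
  sparse_controllable D H s ->
  let N := n.+1 in
  let q := degree_mxminpoly D in
  let Rstar := minn (\rank H) s in
  exists Kstar Sstar : nat,
    (* Kstar is the minimal number of s-sparse inputs *)
    (steerable_in D H s Kstar /\
     forall K, steerable_in D H s K -> (Kstar <= K)%N) /\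
    (* Sstar is the minimal size of S with the PBH-type rank condition *)
    ((exists S : {set 'I_L}, #|S| = Sstar /\ PBH_full D H S) /\
     forall S : {set 'I_L}, PBH_full D H S -> (Sstar <= #|S|)%N) /\
    (N%:R / Rstar%:R <= (Kstar%:R : R)) /\
    ((Kstar%:R : R) <=
       Num.min (q%:R * (Num.ceil (Sstar%:R / s%:R : R))%:~R)
               (N%:R - Rstar%:R + 1)) /\
    (Num.min (q%:R * (Num.ceil (Sstar%:R / s%:R : R))%:~R)
             (N%:R - Rstar%:R + 1) <= (N%:R : R)).
Proof.
move=> s0 sL sc N q Rstar.
have ctrl := SC_ctrl sc.
have [T1 [c1 f1]] := SC2 sc.
have [T0 [c0 V10 r0]] := extend_set (H^T) c1.
have f0 : row_full (VT (H^T) T0 + D^T)%MS.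
  rewrite -sub1mx; apply: submx_trans (_ : (1%:M <= VT (H^T) T1 + D^T)%MS) _.
    by rewrite sub1mx.
  exact: addsmxS.
have [sg [K1 [hK1 hsg hW1]]] := first_block ctrl f0.
have st1 : steerable_in D H s K1.
  apply: (steer (sg := sg)) hW1 => e _.
  by case: (hsg e) => [->|h] //; apply: leq_trans h s0.
have exK : exists K, decP (steerable_in D H s K) by exists K1; apply/decPP.
set Kstar := ex_minn exK.
have [stK minK] : steerable_in D H s Kstar /\ forall K, steerable_in D H s K -> (Kstar <= K)%N.
  rewrite /Kstar; case: ex_minnP => K /decPP hK hmin; split => // K' /decPP; exact: hmin.
have exS : exists m, decP (exists S : {set 'I_L}, #|S| = m /\ PBH_full D H S).
  by exists #|[set: 'I_L]|; apply/decPP; exists setT; split => //; exact: pbh_setT sc.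
set Sstar := ex_minn exS.
have [[S [cS pS]] minS] : (exists S : {set 'I_L}, #|S| = Sstar /\ PBH_full D H S) /\
     forall S : {set 'I_L}, PBH_full D H S -> (Sstar <= #|S|)%N.
  rewrite /Sstar; case: ex_minnP => m /decPP hm hmin; split => // S' pS'.
  by apply: hmin; apply/decPP; exists S'.
exists Kstar, Sstar; split; first by split.
split; first by split => //; exists S.
have lb := lower_bound stK.
have R0 : (0 < Rstar)%N.
  rewrite lt0n; apply/eqP => h; move: lb; rewrite -/Rstar h muln0.
  by rewrite /N.
have RN : (Rstar <= N)%N.
  by apply: leq_trans (geq_minl _ _) _; exact: rank_leq_row.
have ub1 : (Kstar <= N - Rstar + 1)%N.
  apply: leq_trans (minK _ st1) _.
  move: hK1 r0; rewrite mxrank_tr -/Rstar /N; lia.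
have fS := pbh_zero pS.
have [B0 BS [cB0 fB0]] := select_sub fS.
have cB0s : (#|B0| <= s)%N.
  have h1 : (N <= \rank (VT (H^T) T1) + \rank (D^T))%N.
    move: f1; rewrite /row_full => /eqP h; rewrite -[X in (X <= _)%N]h.
    exact: mxrank_adds_leqif.
  have := rank_VT_card (H^T) T1; move: h1 cB0 c1; rewrite /N; lia.
set c := Num.ceil (Sstar%:R / s%:R : R).
have c0' : (0 <= c)%R.
  rewrite /c ceil_ge0; apply: lt_le_trans (_ : (-1 : R) < 0) _; first by rewrite ltrN10.
  by apply: divr_ge0; exact: ler0n.
set m := `|c|%N.
have mc : (m%:R : R) = c%:~R by rewrite natr_absz ger0_norm.
have Sms : (#|S| <= m * s)%N.
  rewrite cS -(ler_nat R) natrM mc.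
  have := ceil_ge (Sstar%:R / s%:R : R); rewrite -/c => h.
  by rewrite -ler_pdivrMr ?ltr0n.
have [blk [bs bcov b0]] := blocks_exist s0 BS cB0s Sms.
have q0 : (0 < q)%N := mxminpoly_nonconstant D.
have Wf := qsched q0 (minpoly_Hq D) (pbh_ctrl pS) fB0 b0 bcov.
have st2 : steerable_in D H s (q * m).
  by apply: (steer (sg := fun e => blk (e %/ q)%N)) Wf => e _; exact: bs.
have ub2 : (Kstar <= q * m)%N := minK _ st2.
have eq1 : (q%:R * c%:~R : R) = (q * m)%:R by rewrite natrM mc.
have eq2 : (N%:R - Rstar%:R + 1 : R) = (N - Rstar + 1)%:R by rewrite natrD natrB.
rewrite -/c eq1 eq2; split; last split.
- by rewrite ler_pdivrMr ?ltr0n // -natrM ler_nat.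
- by rewrite le_min !ler_nat ub1 ub2.
- rewrite ge_min; apply/orP; right; rewrite ler_nat; move: R0; lia.
Qed.
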